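(* Let $(G,+)$ be an abelian group with identity $0$. Let $M$ be a matroid over $G$ and let $N$ be a sparse paving matroid over $G$, both of the same rank $n$, such that $0\notin E(N)$. Assume further that one of the following holds: (1) $|E(M)|<\min\{|E(N)|-1,\,p(G)\}$; or (2) $E(M)$ is not a progression, $G$ is finite, $|E(M)|=|E(N)|-1$ and $|E(N)|<p(G)$; or (3) $E(M)$ is neither a progression nor a semi-progression, $G$ is finite and $|E(M)|=|E(N)|<p(G)$; or (4) $|E(M)|<|E(N)|-n-1$. Then $M$ is matched to $N$.
   Context: $p(G)$ denotes the smallest cardinality of a nonzero subgroup of $G$. A matroid over $G$ is a matroid $M$ whose finite ground set $E(M)$ is a subset of $G$; all matroids are assumed loopless. A matroid of rank $n$ is paving if every $(n-1)$-element subset of its ground set is independent; it is sparse paving if both it and its dual matroid are paving. A progression of length $k$ with difference $x$ and initial term $a$ ($x,a\in G$) is a set $\{a,a+x,\dots,a+(k-1)x\}$; a set $A$ is a semi-progression if $A\setminus\{a\}$ is a progression for some $a\in A$. For matroids $M,N$ over $G$ with $r(M)=r(N)=n>0$ and bases $\mathcal{M}=\{a_1,\dots,a_n\}$ of $M$ and $\mathcal{N}=\{b_1,\dots,b_n\}$ of $N$, $\mathcal{M}$ is matched to $\mathcal{N}$ if there is a permutation $\pi\in S_n$ with $a_i+b_{\pi(i)}\notin E(M)$ for all $i$. $M$ is matched to $N$ if for every basis $\mathcal{M}$ of $M$ there exists a basis $\mathcal{N}$ of $N$ such that $\mathcal{M}$ is matched to $\mathcal{N}$. *)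

(* Defs.v *)
From HB Require Import structures.
From mathcomp Require Import all_boot all_order all_algebra.
From mathcomp Require Import finmap.
Set Implicit Arguments. Unset Strict Implicit. Unset Printing Implicit Defensive.
Import GRing.Theory.
Local Open Scope fset_scope.
Local Open Scope ring_scope.

Record matroid_over (G : zmodType) := MatroidOver {
  ground : {fset G};
  indep : {fset G} -> Prop }.

Section Matroids.
Variable G : zmodType.
Implicit Types (M : matroid_over G) (I J S A B : {fset G}).

Definition is_matroid M : Prop :=
  [/\ indep M fset0,
      (forall I, indep M I -> I `<=` ground M),
      (forall I J, indep M J -> I `<=` J -> indep M I) &
      (forall I J, indep M I -> indep M J -> (#|` I| < #|` J|)%N ->
          exists2 x, x \in J `\` I & indep M (x |` I))].

Definition loopless M : Prop := forall x, x \in ground M -> indep M [fset x].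

Definition basis M B : Prop :=
  indep M B /\ (forall x, x \in ground M -> x \notin B -> ~ indep M (x |` B)).

Definition has_rank M (n : nat) : Prop := exists2 B, basis M B & #|` B| = n.

Definition dual M : matroid_over G :=
  MatroidOver (ground M)
    (fun I => I `<=` ground M /\ exists2 B, basis M B & [disjoint I & B]).

Definition paving M : Prop :=
  forall r, has_rank M r ->
  forall S, S `<=` ground M -> #|` S| = r.-1 -> indep M S.

Definition sparse_paving M : Prop := paving M /\ paving (dual M).

(* A basis A of M is matched to a basis B of N: there is a bijection
   f : A -> B (a permutation pi in S_n after enumerating A and B) with
   a + f a \notin E(M) for all a in A. *)
Definition basis_matched M A B : Prop :=
  exists f : G -> G,
    [/\ {in A &, injective f}, [fset f a | a in A] = B &
        forall a, a \in A -> a + f a \notin ground M].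

Definition matched M N : Prop :=
  forall A, basis M A -> exists2 B, basis N B & basis_matched M A B.

Definition is_progression A : Prop :=
  exists (k : nat) (a x : G),
    forall y, y \in A <-> exists2 i : nat, (i < k)%N & y = a + x *+ i.

Definition is_semi_progression A : Prop :=
  exists2 a, a \in A & is_progression (A `\ a).

(* "k < p(G)": every nonzero subgroup of G has more than k elements
   (only finite subgroups can violate this). *)
Definition is_subgroup (H : {fset G}) : Prop :=
  0 \in H /\ (forall x y, x \in H -> y \in H -> x - y \in H).

Definition lt_pG (k : nat) : Prop :=
  forall H : {fset G}, is_subgroup H -> H != [fset 0] -> (k < #|` H|)%N.

Definition finite_group : Prop := exists s : seq G, forall g : G, g \in s.

End Matroids.

(* Main.v *)
Require Import Defs.
From HB Require Import structures.
From mathcomp Require Import all_boot all_order all_algebra.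
From mathcomp Require Import finmap.
From mathcomp Require Import zify.
From Stdlib Require Import Classical.
Set Implicit Arguments. Unset Strict Implicit. Unset Printing Implicit Defensive.
Import GRing.Theory.
Local Open Scope fset_scope.
Local Open Scope ring_scope.


Definition sumset (G : zmodType) (A B : {fset G}) : {fset G} := [fset a + b | a in A, b in B].
Definition trans (G : zmodType) (A : {fset G}) (e : G) : {fset G} := [fset a + e | a in A].

Lemma sumsetP (G : zmodType) (A B : {fset G}) x :
  reflect (exists a b, [/\ a \in A, b \in B & x = a + b]) (x \in sumset A B).
Proof.
apply: (iffP (imfset2P _ _ _ _ _)).
  by move=> [a aA [b bB ->]]; exists a, b.
by move=> [a [b [aA bB ->]]]; exists a => //; exists b.
Qed.

Lemma mem_sumset (G : zmodType) (A B : {fset G}) a b :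
  a \in A -> b \in B -> a + b \in sumset A B.
Proof. by move=> aA bB; apply/sumsetP; exists a, b. Qed.

Lemma in_trans (G : zmodType) (A : {fset G}) e x : (x \in trans A e) = (x - e \in A).
Proof.
apply/imfsetP/idP => [[a aA ->]|xA]; first by rewrite addrK.
by exists (x - e) => //; rewrite subrK.
Qed.

Lemma card_trans (G : zmodType) (A : {fset G}) e : #|` trans A e| = #|` A|.
Proof. by rewrite card_in_imfset //= => x y _ _; apply: addIr. Qed.

Lemma lt_pG_mono (G : zmodType) k j : lt_pG G k -> (j <= k)%N -> lt_pG G j.
Proof. move=> hk jk H0 sH nH; apply: leq_ltn_trans jk (hk H0 sH nH). Qed.

Lemma sumset_sub (G : zmodType) (A A' B B' : {fset G}) :
  A `<=` A' -> B `<=` B' -> sumset A B `<=` sumset A' B'.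
Proof.
move=> /fsubsetP sA /fsubsetP sB; apply/fsubsetP => x /sumsetP [a [b [aA bB ->]]].
by apply: mem_sumset; [apply: sA | apply: sB].
Qed.

Lemma trans_sub_sumset (G : zmodType) (A B : {fset G}) b :
  b \in B -> trans A b `<=` sumset A B.
Proof.
move=> bB; apply/fsubsetP => x; rewrite in_trans => xA.
by rewrite -(subrK b x); apply: mem_sumset.
Qed.

Lemma card_le_sumset (G : zmodType) (A B : {fset G}) :
  B != fset0 -> (#|` A| <= #|` sumset A B|)%N.
Proof.
move=> /fset0Pn [b bB]; rewrite -(card_trans A b).
exact/fsubset_leq_card/trans_sub_sumset.
Qed.

Lemma stab (G : zmodType) (Y : {fset G}) g k :
  lt_pG G k -> g != 0 -> Y != fset0 -> trans Y g `<=` Y -> (k < #|` Y|)%N.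
Proof.
move=> hk g0 /fset0Pn [y0 y0Y] sY.
have eqT u : trans Y u `<=` Y -> trans Y u = Y.
  by move=> s; apply/eqP; rewrite eqEfcard s card_trans leqnn.
pose H := [fset h in trans Y (- y0) | trans Y h `<=` Y].
have inH u : u \in H = (u \in trans Y (- y0)) && (trans Y u `<=` Y).
  by rewrite !inE.
have subH : is_subgroup H.
  split.
    rewrite inH in_trans opprK add0r y0Y /=.
    by apply/fsubsetP => x; rewrite in_trans subr0.
  move=> x y; rewrite !inH => /andP[_ hx] /andP[_ hy].
  have ex := eqT _ hx; have ey := eqT _ hy.
  have back z : z \in Y -> z - y \in Y.
    by rewrite -{1}ey in_trans.
  have fwd z : z \in Y -> z + x \in Y.
    by move=> zY; rewrite -ex in_trans addrK.
  apply/andP; split.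
    rewrite in_trans opprK.
    have -> : x - y + y0 = (y0 + x) - y by rewrite (addrC y0) addrAC.
    by apply/back/fwd.
  apply/fsubsetP => z; rewrite in_trans => zY.
  have -> : z = (z - (x - y)) + x - y by rewrite opprB addrA subrK addrK.
  by apply/back/fwd.
have gH : g \in H.
  by rewrite inH in_trans opprK (addrC g) (fsubsetP sY) ?in_trans ?addrK.
have Hn : H != [fset 0].
  apply/negP => /eqP H0; move: gH; rewrite H0 => /fset1P g0'.
  by move: g0; rewrite g0' eqxx.
apply: (leq_trans (hk H subH Hn)).
rewrite -(card_trans Y (- y0)); apply: fsubset_leq_card.
by apply/fsubsetP => u; rewrite inH => /andP[].
Qed.

Definition Bf (G : zmodType) (A B : {fset G}) e := [fset b in B | b + e \in A].

Lemma in_Bf (G : zmodType) (A B : {fset G}) e x : (x \in Bf A B e) = (x \in B) && (x + e \in A).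
Proof. by rewrite !inE. Qed.

Lemma Bf_sub (G : zmodType) (A B : {fset G}) e : Bf A B e `<=` B.
Proof. by apply/fsubsetP => x; rewrite in_Bf => /andP[]. Qed.

Lemma etrans_card (G : zmodType) (A B : {fset G}) e :
  (#|` A `|` trans B e| + #|` Bf A B e| = #|` A| + #|` B|)%N.
Proof.
have := cardfsUI A (trans B e); rewrite card_trans => <-; congr (_ + _)%N.
rewrite -(card_trans (Bf A B e) e); congr (#|` _|).
apply/fsetP => x; rewrite in_fsetI !in_trans in_Bf subrK andbC //.
Qed.

Lemma etrans_sub (G : zmodType) (A B : {fset G}) e :
  sumset (A `|` trans B e) (Bf A B e) `<=` sumset A B.
Proof.
apply/fsubsetP => x /sumsetP [u [v [uA vB ->]]].
move: vB; rewrite in_Bf => /andP[vB veA].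
move: uA; rewrite in_fsetU in_trans => /orP[uA|ueB]; first exact: mem_sumset.
have -> : u + v = (v + e) + (u - e) by rewrite addrC -addrA (addrC e) subrK.
exact: mem_sumset.
Qed.

Lemma two_elems (G : choiceType) (X : {fset G}) :
  (1 < #|` X|)%N -> exists x y, [/\ x \in X, y \in X & x != y].
Proof.
move=> h; have : X != fset0 by rewrite -cardfs_gt0; apply: ltnW.
move=> /fset0Pn [x xX].
have : X `\ x != fset0 by rewrite -cardfs_gt0; move: h; rewrite (cardfsD1 x) xX.
move=> /fset0Pn [y]; rewrite in_fsetD1 => /andP[yx yX].
by exists x, y; rewrite eq_sym.
Qed.

Lemma CD (G : zmodType) n : forall (A B : {fset G}), (#|` B| <= n)%N ->
  A != fset0 -> B != fset0 -> lt_pG G #|` sumset A B| ->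
  (#|` A| + #|` B| <= (#|` sumset A B|).+1)%N.
Proof.
elim: n => [|n IH] A B hB A0 B0 hp.
  by move: B0; rewrite -cardfs_gt0; move: hB; rewrite leqn0 => /eqP ->.
have hAB := card_le_sumset A B0.
case: (leqP #|` B| 1) => hB1; first by lia.
have [[a [b [b' [aA bB b'B nb]]]]|hall] :
  (exists a b b', [/\ a \in A, b \in B, b' \in B & b' + (a - b) \notin A]) \/
  (forall a b b', a \in A -> b \in B -> b' \in B -> b' + (a - b) \in A).
  case: (classic (exists a b b', [/\ a \in A, b \in B, b' \in B & b' + (a - b) \notin A])) => h; first by left.
  right => a b b' aA bB b'B; case: (boolP (b' + (a - b) \in A)) => // hn.
  by exfalso; apply: h; exists a, b, b'.
  pose e := a - b.
  have bBe : b \in Bf A B e by rewrite in_Bf bB /e addrC subrK.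
  have b'Be : b' \notin Bf A B e by rewrite in_Bf b'B.
  have ltB : (#|` Bf A B e| < #|` B|)%N.
    apply: fproper_ltn_card; rewrite fproperE Bf_sub /=.
    by apply/negP => /fsubsetP /(_ b' b'B); apply/negP.
  have sub := etrans_sub A B e.
  have := IH (A `|` trans B e) (Bf A B e).
  have := etrans_card A B e.
  have := fsubset_leq_card sub.
  move=> h1 h2 h3.
  have hn : (#|` Bf A B e| <= n)%N by rewrite -ltnS; apply: leq_trans ltB hB.
  have h4 := h3 hn (fsubset_neq0 (fsubsetUl A _) A0).
  have h5 : Bf A B e != fset0 by apply/fset0Pn; exists b.
  have := h4 h5 (lt_pG_mono hp h1).
  by lia.
have [x [y [xB yB xy]]] := two_elems hB1.
have gA : trans A (y - x) `<=` A.
  apply/fsubsetP => z; rewrite in_trans => zA.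
  have := hall _ _ _ zA xB yB.
  by rewrite opprB -(addrA z) (addrC x) -(addrA (- y)) addrN addr0 addrCA subrr addr0.
have := stab hp _ A0 gA; rewrite subr_eq0 eq_sym xy => /(_ isT).
by lia.
Qed.

Definition chain (G : zmodType) (s d : G) (N : nat) : {fset G} :=
  [fset s + d *+ i | i in iota 0 N].

Lemma in_chain (G : zmodType) (s d : G) N x :
  reflect (exists2 i, (i < N)%N & x = s + d *+ i) (x \in chain s d N).
Proof.
apply: (iffP (imfsetP _ _ _ _)) => [[i]|[i]].
  by rewrite /= mem_iota add0n /= => hi ->; exists i.
by move=> hi ->; exists i => //=; rewrite mem_iota add0n.
Qed.

Lemma chain_rep (G : zmodType) (s d : G) N :
  #|` chain s d N| = N \/ exists q, [/\ (0 < q)%N, (q <= N)%N & d *+ q = 0].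
Proof.
elim: N => [|N [IH|[q [q0 qN dq]]]].
- left; apply/eqP; rewrite cardfs_eq0; apply/eqP/fsetP => x.
  by rewrite in_fset0; apply/in_chain => -[].
- have eqc : chain s d N.+1 = (s + d *+ N) |` chain s d N.
    apply/fsetP => x; rewrite in_fset1U; apply/in_chain/orP.
      move=> [i]; rewrite ltnS leq_eqVlt => /orP[/eqP ->|hi] ->; first by left.
      by right; apply/in_chain; exists i.
    move=> [/eqP ->|/in_chain [i hi ->]]; first by exists N.
    by exists i => //; apply: ltnW.
  case: (boolP (s + d *+ N \in chain s d N)) => hin.
    right; move/in_chain: hin => [i hi] h0.
    have h : d *+ (N - i) = 0.
      apply: (addrI (s + d *+ i)); rewrite addr0 -{2}h0 -addrA -mulrnDr subnKC //.
      exact: ltnW.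
    by exists (N - i)%N; split => //; [rewrite subn_gt0 | apply: leq_trans (leq_subr _ _) _].
  by left; rewrite eqc cardfsU1 hin IH.
- by right; exists q; split => //; apply: leq_trans qN _.
Qed.

Lemma chain_stab (G : zmodType) (s d : G) q :
  (0 < q)%N -> d *+ q = 0 -> trans (chain s d q) d `<=` chain s d q.
Proof.
move=> q0 dq; apply/fsubsetP => x; rewrite in_trans => /in_chain [i hi hx].
apply/in_chain; move: hi; rewrite leq_eqVlt => /orP[/eqP hi|hi].
  exists 0%N => //; rewrite mulr0n addr0.
  by rewrite -(subrK d x) hx -addrA -mulrSr hi dq addr0.
by exists i.+1 => //; rewrite mulrSr addrA -hx subrK.
Qed.

Lemma chain_sub_A (G : zmodType) (s d : G) N (A : {fset G}) :
  (forall i, (i < N)%N -> s + d *+ i \in A) -> chain s d N `<=` A.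
Proof. by move=> h; apply/fsubsetP => x /in_chain [i hi ->]; apply: h. Qed.

Lemma base_prog (G : zmodType) (A : {fset G}) d :
  d != 0 -> A != fset0 -> #|` A `|` trans A d| = (#|` A|).+1 -> lt_pG G #|` A| ->
  exists s j, A = chain s d j.
Proof.
move=> d0 A0 hc hp.
have hD : #|` A `\` trans A d| = 1%N.
  have h1 := cardfsUI A (trans A d); have h2 := cardfsID (trans A d) A.
  rewrite card_trans in h1; lia.
have [s hs] : exists s, A `\` trans A d = [fset s] by apply/cardfs1P/eqP.
have : s \in A `\` trans A d by rewrite hs fset11.
rewrite in_fsetD in_trans => /andP[snA sA].
have uniq x : x \in A -> x - d \notin A -> x = s.
  by move=> xA xn; apply/fset1P; rewrite -hs in_fsetD in_trans xA xn.
have nostab g Y : g != 0 -> Y `<=` A -> Y != fset0 -> trans Y g `<=` Y -> False.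
  move=> g0 YA Y0 sY; have := stab hp g0 Y0 sY.
  by have := fsubset_leq_card YA; lia.
have exP : exists i, (fun i => s + d *+ i \notin A) i.
  apply: NNPP => hn.
  have all i : s + d *+ i \in A.
    by case: (boolP (s + d *+ i \in A)) => // h; exfalso; apply: hn; exists i.
  case: (chain_rep s d (#|`A|).+1) => [hc'|[q [q0 qN dq]]].
    have := fsubset_leq_card (@chain_sub_A _ s d (#|`A|).+1 A (fun i _ => all i)).
    by rewrite hc' ltnn.
  apply: (nostab d (chain s d q)) => //.
  - exact: (@chain_sub_A _ s d q A (fun i _ => all i)).
  - by apply/fset0Pn; exists (s + d *+ 0); apply/in_chain; exists 0%N.
  - exact: chain_stab.
case: (ex_minnP exP) => j /= Pj minj.
have inA i : (i < j)%N -> s + d *+ i \in A.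
  move=> hi; case: (boolP (s + d *+ i \in A)) => // h.
  by have := minj i h; lia.
have j0 : (0 < j)%N.
  rewrite lt0n; apply/negP => /eqP j0; move: Pj; rewrite j0 mulr0n addr0 sA.
  by [].
exists s, j; apply/eqP; rewrite eqEfsubset; apply/andP; split; last first.
  exact: chain_sub_A.
case: (boolP (A `<=` chain s d j)) => // hn; exfalso.
have [x0 x0A x0n] := fsubsetPn _ _ hn.
apply: (nostab (- d) (A `\` chain s d j)).
- by rewrite oppr_eq0.
- exact: fsubsetDl.
- by apply/fset0Pn; exists x0; rewrite in_fsetD x0A x0n.
apply/fsubsetP => x; rewrite in_trans opprK => /fsetDP [yA ync].
apply/fsetDP; split; last first.
  apply/negP => /in_chain [i hi hx].
  have hxd : x + d = s + d *+ i.+1 by rewrite hx mulrSr addrA.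
  case: (ltnP i.+1 j) => hij.
    by move: ync; rewrite hxd => /negP; apply; apply/in_chain; exists i.+1.
  have eij : i.+1 = j by apply/eqP; rewrite eqn_leq hij hi.
  by move: Pj; rewrite -eij -hxd yA.
case: (boolP (x \in A)) => // xn.
have := uniq (x + d) yA; rewrite addrK xn => /(_ isT) hxs.
exfalso; by move: ync; rewrite hxs => /negP; apply; apply/in_chain; exists 0%N => //; rewrite mulr0n addr0.
Qed.
Lemma E2 (G : zmodType) (s b1 b2 x : G) : s + b1 + (x + (b2 - b1)) - b2 = s + x.
Proof. by rewrite (addrC x) !addrA (addrAC (s + b1) b2) addrK (addrAC s b2) addrK. Qed.
Lemma E1 (G : zmodType) (s b1 x : G) : s + b1 + x - b1 = s + x.
Proof. by rewrite (addrAC s b1) addrK. Qed.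
Lemma E3 (G : zmodType) (s b1 x y : G) : y - b1 = s + x -> y = s + b1 + x.
Proof. by move=> h; rewrite -(subrK b1 y) h (addrAC s x). Qed.
Lemma E4 (G : zmodType) (s b1 b2 x y : G) : y - b2 = s + x -> y = s + b1 + (x + (b2 - b1)).
Proof. by move=> h; rewrite -(subrK b2 y) h; apply: (@addIr _ (- b2)); rewrite E2 addrK. Qed.

Lemma mem_sumset2 (G : zmodType) (A : {fset G}) b1 b2 y :
  (y \in sumset A [fset b1; b2]) = (y - b1 \in A) || (y - b2 \in A).
Proof.
apply/sumsetP/orP => [[a [b [aA]]]|[h|h]].
- by rewrite in_fset2 => /orP[/eqP->|/eqP->] ->; [left|right]; rewrite addrK.
- by exists (y - b1), b1; rewrite subrK in_fset2 eqxx.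
- by exists (y - b2), b2; rewrite subrK in_fset2 eqxx orbT.
Qed.

Lemma base2 (G : zmodType) (A : {fset G}) b1 b2 :
  b1 != b2 -> A != fset0 -> #|` sumset A [fset b1; b2]| = (#|` A|).+1 ->
  lt_pG G #|` sumset A [fset b1; b2]| -> is_progression (sumset A [fset b1; b2]).
Proof.
move=> b12 A0 hc hp.
pose d := b2 - b1.
have d0 : d != 0 by rewrite /d subr_eq0 eq_sym.
have eqU : sumset A [fset b1; b2] = trans (A `|` trans A d) b1.
  apply/fsetP => y; rewrite mem_sumset2 in_trans in_fsetU in_trans.
  by rewrite /d opprB addrA subrK.
have hp' : lt_pG G #|` A|.
  apply: lt_pG_mono hp _; apply: card_le_sumset.
  by apply/fset0Pn; exists b1; rewrite in_fset2 eqxx.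
have hc' : #|` A `|` trans A d| = (#|` A|).+1 by rewrite -hc eqU card_trans.
have [s [j hA]] := base_prog d0 A0 hc' hp'.
have j0 : (0 < j)%N.
  move/fset0Pn: A0 => [a]; rewrite hA => /in_chain [i hi _].
  by apply: leq_ltn_trans hi.
exists j.+1, (s + b1), d => y; rewrite mem_sumset2 hA; split.
  move=> /orP[/in_chain [i hi h]|/in_chain [i hi h]].
    by exists i; [apply: ltnW | apply: E3].
  by exists i.+1; [ | rewrite mulrSr; apply: E4].
move=> [i hi ->]; apply/orP.
case: (ltnP i j) => hij.
  by left; apply/in_chain; exists i => //; rewrite E1.
right; apply/in_chain; exists i.-1.
  by move: hi hij; case: (i) => //= i'; lia.
have ei : i = (i.-1).+1 by move: hij j0; case: (i) => //=; lia.
by rewrite {1}ei mulrSr E2.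
Qed.

Lemma E5 (G : zmodType) (b1 b2 x : G) : b2 + (x - (b1 + b2)) = x - b1.
Proof. by rewrite opprD addrCA (addrCA b2) subrr addr0. Qed.

Lemma E6 (G : zmodType) (a1 a2 x : G) : (x - a2) + (a1 + a2 - x) = a1.
Proof. by rewrite addrC -addrA addKr addrK. Qed.
Lemma E6' (G : zmodType) (a1 a2 x : G) : (x - a1) + (a1 + a2 - x) = a2.
Proof. by rewrite (addrC a1 a2) E6. Qed.

Lemma card_U_le (G : choiceType) (X Y : {fset G}) : (#|` X `|` Y| <= #|` X| + #|` Y|)%N.
Proof. by have := cardfsUI X Y; lia. Qed.

Lemma third_elem (G : choiceType) (B : {fset G}) b1 b2 :
  (3 <= #|` B|)%N -> exists2 b3, b3 \in B & (b3 != b1) && (b3 != b2).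
Proof.
move=> hB.
have : B `\` [fset b1; b2] != fset0.
  rewrite -cardfs_gt0 cardfsD.
  have := fsubset_leq_card (fsubsetIr B [fset b1; b2]).
  have := cardfs2 b1 b2; case: (b1 != b2) => /= -> ; lia.
move=> /fset0Pn [b3]; rewrite in_fsetD in_fset2 negb_or => /andP[h b3B].
by exists b3.
Qed.

Lemma sclaim (G : zmodType) n : forall (A B : {fset G}), (#|` A| <= n)%N ->
  (3 <= #|` B|)%N -> (2 <= #|` A|)%N ->
  (#|` sumset A B|).+1 = (#|` A| + #|` B|)%N -> lt_pG G #|` sumset A B| ->
  (forall e, (2 <= #|` Bf A B e|)%N -> B `<=` Bf A B e) -> False.
Proof.
elim: n => [|n IH] A B hn hB hA hc hp hS; first by lia.
have [b1 [b2 [b1B b2B b12]]] := two_elems (leq_trans (isT : (1 < 3)%N) hB).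
pose F := [fset e in trans A (- b1) | trans B e `<=` A].
have inF e : e \in F <-> (forall b, b \in B -> b + e \in A).
  rewrite !inE; split.
    by move=> /andP[_ /fsubsetP h] b bB; apply: h; rewrite in_trans addrK.
  move=> h; apply/andP; split.
    by rewrite in_trans opprK addrC; apply: h.
  by apply/fsubsetP => x; rewrite in_trans => xe; rewrite -(subrK e x); apply: h.
clearbody F.
have K1 c1 c2 e : c1 \in B -> c2 \in B -> c1 != c2 -> c1 + e \in A -> c2 + e \in A -> e \in F.
  move=> c1B c2B c12 h1 h2; apply/inF => b bB.
  have : B `<=` Bf A B e.
    have c2e : #|` [fset c1; c2]| = 2%N by rewrite cardfs2 c12.
    apply: hS; rewrite -c2e; apply: fsubset_leq_card.
    by apply/fsubsetP => x; rewrite in_fset2 in_Bf => /orP[/eqP->|/eqP->]; apply/andP.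
  by move/fsubsetP => /(_ b bB); rewrite in_Bf => /andP[].
have Int c1 c2 : c1 \in B -> c2 \in B -> c1 != c2 ->
    #|` trans A c1 `&` trans A c2| = #|` F|.
  move=> c1B c2B c12; rewrite -(card_trans F (c1 + c2)); congr (#|` _|).
  apply/fsetP => x; rewrite in_fsetI !in_trans; apply/andP/idP.
    move=> [h1 h2]; apply: (K1 c2 c1) => //; first by rewrite eq_sym.
      rewrite (E5 c1 c2 x). by [].
    by rewrite (addrC c1 c2) (E5 c2 c1 x).
  move/inF => h; split.
    by rewrite -(E5 c1 c2 x); apply: h.
  by rewrite -(E5 c2 c1 x) (addrC c2 c1); apply: h.
have Usub c1 c2 : c1 \in B -> c2 \in B -> trans A c1 `|` trans A c2 `<=` sumset A B.
  by move=> c1B c2B; rewrite fsubUset !trans_sub_sumset.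
have Ucard c1 c2 : c1 \in B -> c2 \in B -> c1 != c2 ->
    (#|` trans A c1 `|` trans A c2| + #|` F| = #|` A| + #|` A|)%N.
  by move=> c1B c2B c12; have := cardfsUI (trans A c1) (trans A c2); rewrite !card_trans Int.
have st2 : (#|` A| + 1 <= #|` F| + #|` B|)%N.
  have := fsubset_leq_card (Usub _ _ b1B b2B); have := Ucard _ _ b1B b2B b12; lia.
case: (boolP (F == fset0)) => [/eqP F0|F0].
  have [a1 [a2 [a1A a2A a12]]] := two_elems hA.
  have tsub a : a \in A -> trans B a `<=` sumset A B.
    move=> aA; apply/fsubsetP => x; rewrite in_trans => xB.
    by rewrite -(subrK a x) addrC; apply: mem_sumset.
  have I0 : trans B a1 `&` trans B a2 = fset0.
    apply/fsetP => x; rewrite in_fset0 in_fsetI !in_trans; apply/negP => /andP[h1 h2].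
    have : a1 + a2 - x \in F.
      apply: (K1 (x - a2) (x - a1)) => //.
      - by apply: contra a12 => /eqP h; rewrite eq_sym; apply/eqP; apply: (addIr (- x)); apply: oppr_inj; rewrite !opprB.
      - by rewrite E6.
      - by rewrite E6'.
    by rewrite F0 in_fset0.
  have h1 := cardfsUI (trans B a1) (trans B a2).
  rewrite I0 cardfs0 !card_trans in h1.
  have h2 : (#|` trans B a1 `|` trans B a2| <= #|` sumset A B|)%N.
    by apply: fsubset_leq_card; rewrite fsubUset !tsub.
  by move: st2; rewrite F0 cardfs0; lia.
have B0 : B != fset0 by apply/fset0Pn; exists b1.
have FB : sumset F B `<=` A.
  apply/fsubsetP => x /sumsetP [e [b [eF bB ->]]]; rewrite addrC.
  exact: ((inF e).1 eF b bB).
have hAle := card_le_sumset A B0.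
have hpF : lt_pG G #|` sumset F B| := lt_pG_mono hp (leq_trans (fsubset_leq_card FB) hAle).
have cdF := CD (leqnn #|`B|) F0 B0 hpF.
have cFB := fsubset_leq_card FB.
have eqU : trans A b1 `|` trans A b2 = sumset A B.
  apply/eqP; rewrite eqEfcard (Usub _ _ b1B b2B) /=.
  have := Ucard _ _ b1B b2B b12 => hU.
  have h : (#|` sumset A B| <= #|` trans A b1 `|` trans A b2|)%N by lia.
  exact: h.
have [b3 b3B /andP[b31 b32]] := third_elem b1 b2 hB.
have h5 : (#|` A| <= #|` F| + #|` F|)%N.
  have : trans A b3 `<=` (trans A b3 `&` trans A b1) `|` (trans A b3 `&` trans A b2).
    by rewrite -fsetIUr eqU fsubsetIidl trans_sub_sumset.
  move/fsubset_leq_card; rewrite card_trans.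
  have := card_U_le (trans A b3 `&` trans A b1) (trans A b3 `&` trans A b2).
  rewrite (Int _ _ b3B b1B b31) (Int _ _ b3B b2B b32); lia.
apply: (IH F B) => //; try lia.
move=> e /two_elems [c1 [c2 [c1F c2F c12]]].
apply/fsubsetP => b bB; rewrite in_Bf bB /=.
move: c1F c2F; rewrite !in_Bf => /andP[c1B c1e] /andP[c2B c2e].
apply: (K1 c1 c2) => //.
  by rewrite addrCA; apply: ((inF _).1 c1e b bB).
by rewrite addrCA; apply: ((inF _).1 c2e b bB).
Qed.


Lemma vosper (G : zmodType) n : forall (A B : {fset G}), (#|` B| <= n)%N ->
  (2 <= #|` A|)%N -> (2 <= #|` B|)%N ->
  (#|` sumset A B|).+1 = (#|` A| + #|` B|)%N -> lt_pG G #|` sumset A B| ->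
  is_progression (sumset A B).
Proof.
elim: n => [|n IH] A B hn hA hB hc hp; first by lia.
have A0 : A != fset0 by rewrite -cardfs_gt0; lia.
case: (ltnP 2 #|` B|) => hB3; last first.
  have [b1 [b2 [b1B b2B b12]]] := two_elems hB.
  have c2 : #|` [fset b1; b2]| = 2%N by rewrite cardfs2 b12.
  have eB : B = [fset b1; b2].
    apply/eqP; rewrite eq_sym eqEfcard c2 hB3 andbT.
    by apply/fsubsetP => x; rewrite in_fset2 => /orP[/eqP->|/eqP->].
  rewrite eB in hc hp *; apply: base2 => //.
  have h : #|` sumset A [fset b1; b2]| = (#|` A|).+1 by rewrite c2 in hc; lia.
  exact: h.
case: (classic (forall e, (2 <= #|` Bf A B e|)%N -> B `<=` Bf A B e)) => hS.
  by exfalso; apply: (sclaim (leqnn _) hB3 hA hc hp hS).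
have [e he] := not_all_ex_not _ _ hS.
have h2 : (2 <= #|` Bf A B e|)%N.
  case: (boolP (2 <= #|` Bf A B e|)%N) => // h; exfalso; apply: he => h'.
  by rewrite h' in h.
have nsub : ~~ (B `<=` Bf A B e) by apply/negP => s; apply: he => _; exact: s.
have ltB : (#|` Bf A B e| < #|` B|)%N.
  by apply: fproper_ltn_card; rewrite fproperE Bf_sub.
have sub := etrans_sub A B e.
have cE := etrans_card A B e.
have A'0 : A `|` trans B e != fset0 by apply: fsubset_neq0 A0; apply: fsubsetUl.
have Be0 : Bf A B e != fset0 by rewrite -cardfs_gt0; lia.
have hpe := lt_pG_mono hp (fsubset_leq_card sub).
have cd := CD (leqnn _) A'0 Be0 hpe.
have cA := fsubset_leq_card (fsubsetUl A (trans B e)).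
have cs := fsubset_leq_card sub.
have eqS : sumset (A `|` trans B e) (Bf A B e) = sumset A B.
  apply/eqP; rewrite eqEfcard sub /=.
  have h : (#|` sumset A B| <= #|` sumset (A `|` trans B e) (Bf A B e)|)%N by lia.
  exact: h.
rewrite -eqS; apply: IH.
- have h : (#|` Bf A B e| <= n)%N by lia.
  exact: h.
- have h : (2 <= #|` A `|` trans B e|)%N by lia.
  exact: h.
- exact: h2.
- rewrite eqS; have h : (#|` sumset A B|.+1 = #|` A `|` trans B e| + #|` Bf A B e|)%N by lia.
  exact: h.
- by rewrite eqS.
Qed.


Definition HU (T : choiceType) (S : T -> {fset T}) (X : {fset T}) : {fset T} :=
  \bigcup_(a <- X) S a.

Lemma inHU (T : choiceType) (S : T -> {fset T}) X y :
  y \in HU S X <-> exists2 a, a \in X & y \in S a.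
Proof.
split => [/bigfcupP [a /andP[aX _] yS]|[a aX yS]]; first by exists a.
by apply/bigfcupP; exists a => //; rewrite aX.
Qed.

Lemma hall_empty (T : choiceType) (S : T -> {fset T}) (A : {fset T}) :
  A = fset0 -> exists f : T -> T, {in A &, injective f} /\ (forall a, a \in A -> f a \in S a).
Proof. by move=> ->; exists id; split => [x y|a]; rewrite in_fset0. Qed.

Lemma hall (T : choiceType) n : forall (S : T -> {fset T}) (A : {fset T}),
  (#|` A| <= n)%N -> (forall X, X `<=` A -> (#|` X| <= #|` HU S X|)%N) ->
  exists f : T -> T, {in A &, injective f} /\ (forall a, a \in A -> f a \in S a).
Proof.
elim: n => [|n IH] S A hn hH.
  by apply: hall_empty; apply: cardfs0_eq; lia.
case: (boolP (A == fset0)) => [/eqP A0|A0]; first exact: hall_empty.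
case: (classic (exists X, [/\ X `<=` A, X != fset0, X != A & (#|` HU S X| <= #|` X|)%N])).
  move=> [X [XA X0 XnA tX]].
  have ltX : (#|` X| < #|` A|)%N by apply: fproper_ltn_card; rewrite fproperEneq XnA XA.
  have [f1 [i1 p1]] := IH S X (ltac:(lia)) (fun Y YX => hH Y (fsubset_trans YX XA)).
  pose S2 := fun a => S a `\` HU S X.
  have cA2 : (#|` A `\` X| < #|` A|)%N.
    rewrite cardfsDS //; move: X0; rewrite -cardfs_gt0; lia.
  have hH2 : forall Y, Y `<=` A `\` X -> (#|` Y| <= #|` HU S2 Y|)%N.
    move=> Y YA2.
    have YA : Y `<=` A by apply: fsubset_trans YA2 (fsubsetDl _ _).
    have YX : Y `&` X = fset0.
      apply/fsetP => x; rewrite in_fsetI in_fset0; apply/negP => /andP[xY xX].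
      by move/fsubsetP: YA2 => /(_ x xY); rewrite in_fsetD xX.
    have cYX := cardfsUI Y X; rewrite YX cardfs0 in cYX.
    have hYX := hH (Y `|` X) (ltac:(by rewrite fsubUset YA XA)).
    have sub : HU S (Y `|` X) `<=` HU S2 Y `|` HU S X.
      apply/fsubsetP => b /inHU [a]; rewrite in_fsetU => aYX bS.
      rewrite in_fsetU; case: (boolP (b \in HU S X)) => hb; first by rewrite orbT.
      apply/orP; left; apply/inHU; exists a; last by rewrite in_fsetD hb.
      case/orP: aYX => // aX; exfalso; move/negP: hb; apply; apply/inHU; by exists a.
    have := fsubset_leq_card sub; have := cardfsUI (HU S2 Y) (HU S X).
    lia.
  have [f2 [i2 p2]] := IH S2 (A `\` X) (ltac:(lia)) hH2.
  exists (fun a => if a \in X then f1 a else f2 a); split.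
    move=> a a' aA a'A /=.
    case: (boolP (a \in X)) => aX; case: (boolP (a' \in X)) => a'X.
    - exact: i1.
    - move=> e; exfalso; have := p2 a' (ltac:(by rewrite in_fsetD a'X a'A)).
      rewrite -e in_fsetD => /andP[/negP h _]; apply: h; apply/inHU; exists a => //.
      exact: p1.
    - move=> e; exfalso; have := p2 a (ltac:(by rewrite in_fsetD aX aA)).
      rewrite e in_fsetD => /andP[/negP h _]; apply: h; apply/inHU; exists a' => //.
      exact: p1.
    - by apply: i2; rewrite in_fsetD ?aX ?a'X.
  move=> a aA /=; case: (boolP (a \in X)) => aX; first exact: p1.
  have := p2 a (ltac:(by rewrite in_fsetD aX aA)).
  by rewrite in_fsetD => /andP[].
move=> ntight.
have [a0 a0A] := fset0Pn _ A0.
have : (0 < #|` HU S [fset a0]|)%N.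
  by have := hH [fset a0] (ltac:(by rewrite fsub1set)); rewrite cardfs1.
rewrite cardfs_gt0 => /fset0Pn [y /inHU [a1 /fset1P -> ya0]].
pose S1 := fun a => S a `\ y.
have hH1 : forall Y, Y `<=` A `\ a0 -> (#|` Y| <= #|` HU S1 Y|)%N.
  move=> Y YA1.
  case: (boolP (Y == fset0)) => [/eqP ->|Y0]; first by rewrite cardfs0.
  have YA : Y `<=` A by apply: fsubset_trans YA1 (fsubsetDl _ _).
  have a0Y : a0 \notin Y by apply/negP => /(fsubsetP YA1); rewrite in_fsetD1 eqxx.
  have YnA : Y != A by apply: contraNneq a0Y => ->.
  have lt : (#|` Y| < #|` HU S Y|)%N.
    rewrite ltnNge; apply/negP => h; apply: ntight; exists Y; split => //.
  have sub : HU S Y `<=` y |` HU S1 Y.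
    apply/fsubsetP => b /inHU [a aY bS]; rewrite in_fset1U.
    case: (boolP (b == y)) => //= hb; apply/inHU; exists a => //.
    by rewrite in_fsetD1 hb.
  have := fsubset_leq_card sub; rewrite cardfsU1; lia.
have [f1 [i1 p1]] := IH S1 (A `\ a0) (ltac:(move: hn; rewrite (cardfsD1 a0 A) a0A; lia)) hH1.
exists (fun a => if a == a0 then y else f1 a); split.
  move=> a a' aA a'A /=.
  case: (boolP (a == a0)) => aa; case: (boolP (a' == a0)) => a'a.
  - by rewrite (eqP aa) (eqP a'a).
  - move=> e; exfalso; have := p1 a' (ltac:(by rewrite in_fsetD1 a'a a'A)).
    by rewrite -e in_fsetD1 eqxx.
  - move=> e; exfalso; have := p1 a (ltac:(by rewrite in_fsetD1 aa aA)).
    by rewrite e in_fsetD1 eqxx.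
  - by apply: i1; rewrite in_fsetD1 ?aa ?a'a.
move=> a aA /=; case: (boolP (a == a0)) => [/eqP ->|aa] //.
have := p1 a (ltac:(by rewrite in_fsetD1 aa aA)).
by rewrite in_fsetD1 => /andP[].
Qed.


Lemma indep_le (G : zmodType) (M : matroid_over G) I B :
  is_matroid M -> basis M B -> indep M I -> (#|` I| <= #|` B|)%N.
Proof.
move=> [_ sub _ ex] [iB mB] iI; rewrite leqNgt; apply/negP => lt.
have [x] := ex B I iB iI lt; rewrite in_fsetD => /andP[xnB xI] ix.
by apply: (mB x) => //; apply: (fsubsetP (sub I iI)).
Qed.

Lemma basis_card (G : zmodType) (M : matroid_over G) B1 B2 :
  is_matroid M -> basis M B1 -> basis M B2 -> #|` B1| = #|` B2|.
Proof.
move=> hM h1 h2; apply/eqP; rewrite eqn_leq.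
by rewrite (indep_le hM h2 h1.1) (indep_le hM h1 h2.1).
Qed.

Lemma indep_basis (G : zmodType) (M : matroid_over G) B I :
  is_matroid M -> basis M B -> indep M I -> #|` I| = #|` B| -> basis M I.
Proof.
move=> hM hB iI cI; split => // x xE xI ix.
by have := indep_le hM hB ix; rewrite cardfsU1 xI; lia.
Qed.

Lemma indep_sub (G : zmodType) (M : matroid_over G) I :
  is_matroid M -> indep M I -> I `<=` ground M.
Proof. by move=> [_ sub _ _]; apply: sub. Qed.

Lemma dual_basis (G : zmodType) (N : matroid_over G) B0 :
  is_matroid N -> basis N B0 -> basis (dual N) (ground N `\` B0).
Proof.
move=> hN hB0; split.
  split; first exact: fsubsetDl.
  by exists B0 => //; apply/fdisjointP => x; rewrite in_fsetD; case/andP.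
move=> z zE znD [_ [B hB dis]].
have zB0 : z \in B0 by move: znD; rewrite in_fsetD zE andbT negbK.
have BE := indep_sub hN hB.1.
have sub : B `<=` B0 `\ z.
  apply/fsubsetP => b bB; rewrite in_fsetD1.
  have bnot : b \notin z |` (ground N `\` B0).
    by apply/negP => /((fdisjointP dis) b); rewrite bB.
  move: bnot; rewrite in_fset1U in_fsetD negb_or negb_and negbK (fsubsetP BE b bB) /=.
  by rewrite orbF.
have := fsubset_leq_card sub; have := cardfsD1 z B0; rewrite zB0 (basis_card hN hB hB0) /=.
by lia.
Qed.

Lemma P2 (G : zmodType) (N : matroid_over G) n S x y :
  is_matroid N -> sparse_paving N -> has_rank N n -> (0 < n)%N ->
  S `<=` ground N -> #|` S| = n.-1 -> x \in ground N -> y \in ground N ->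
  x \notin S -> y \notin S -> x != y -> ~ basis N (x |` S) -> basis N (y |` S).
Proof.
move=> hN [pN pD] hr n0 SE cS xE yE xS yS xy nb.
have iS : indep N S := pN n hr S SE cS.
have [B0 hB0 cB0] := hr.
have hD := dual_basis hN hB0.
have hrD : has_rank (dual N) #|` ground N `\` B0| by exists (ground N `\` B0).
have B0E := indep_sub hN hB0.1.
have XE : x |` (y |` S) `<=` ground N.
  by rewrite !fsubUset !fsub1set xE yE SE.
have cX : #|` x |` (y |` S)| = n.+1.
  rewrite cardfsU1 cardfsU1 in_fset1U negb_or xy xS yS cS /=; lia.
pose C := ground N `\` (x |` (y |` S)).
have cC : #|` C| = (#|` ground N `\` B0|).-1.
  rewrite /C !cardfsDS // cX cB0.
  have := fsubset_leq_card XE; rewrite cX; lia.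
have [_ [B hB dis]] := pD _ hrD C (fsubsetDl _ _) cC.
have BE := indep_sub hN hB.1.
have cB : #|` B| = n by rewrite (basis_card hN hB hB0).
have [z] := (let: And4 _ _ _ ex := hN in ex) S B iS hB.1 (ltac:(lia)).
rewrite in_fsetD => /andP[zS zB] iz.
have czS : #|` z |` S| = #|` B0| by rewrite cardfsU1 zS cS cB0; lia.
have bz := indep_basis hN hB0 iz czS.
have : z \in x |` (y |` S).
  move/fdisjointP: dis => /(_ z); rewrite /C in_fsetD (fsubsetP BE z zB) andbT.
  by case: (z \in x |` (y |` S)) => // /(_ isT); rewrite zB.
rewrite !in_fset1U (negbTE zS) orbF => /orP[/eqP zx|/eqP zy]; last by rewrite -zy.
by exfalso; apply: nb; rewrite -zx.
Qed.


Unset Implicit Arguments.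

Theorem theorem2p3 (G : zmodType) (M N : matroid_over G) (n : nat) :
  is_matroid M -> loopless M ->
  is_matroid N -> loopless N -> sparse_paving N ->
  has_rank M n -> has_rank N n ->
  (0 : G) \notin ground N ->
  [\/ ((#|` ground M|.+1 < #|` ground N|)%N /\ lt_pG G #|` ground M|),
      [/\ ~ is_progression (ground M), finite_group G,
          (#|` ground M|.+1 = #|` ground N|)%N & lt_pG G #|` ground N|],
      [/\ ~ is_progression (ground M) /\ ~ is_semi_progression (ground M),
          finite_group G, #|` ground M| = #|` ground N| & lt_pG G #|` ground N|]
    | (#|` ground M| + n + 1 < #|` ground N|)%N] ->
  matched M N.
Proof.
move=> hM lM hN lN sp [BM hBM cBM] hrN N0 hcase A hA.
have cA : #|` A| = n by rewrite (basis_card hM hA hBM).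
have AE := indep_sub hM hA.1.
pose S := fun a => [fset b in ground N | a + b \notin ground M].
have inS a b : b \in S a = (b \in ground N) && (a + b \notin ground M) by rewrite !inE.
have key : forall X B : {fset G}, X != fset0 -> B != fset0 -> sumset X B `<=` ground M ->
    (#|` X| <= n)%N -> (#|` ground N|.+1 <= #|` X| + #|` B|)%N ->
    ((#|` X| + #|` B| = #|` ground N|.+1)%N -> (2 <= #|` X|)%N /\ (2 <= #|` B|)%N) -> False.
  move=> X B X0 B0 sXB cX cXB h2.
  have cs := fsubset_leq_card sXB.
  case: hcase => [[c1 p1]|[np fin c2 p2]|[[np nsp] fin c3 p3]|c4].
  - have hp := lt_pG_mono p1 cs.
    by have := CD (leqnn _) X0 B0 hp; lia.
  - have hp := lt_pG_mono p2 (ltac:(lia) : (#|` sumset X B| <= #|` ground N|)%N).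
    by have := CD (leqnn _) X0 B0 hp; lia.
  - have hp := lt_pG_mono p3 (ltac:(lia) : (#|` sumset X B| <= #|` ground N|)%N).
    have cd := CD (leqnn _) X0 B0 hp.
    have eqk : (#|` X| + #|` B| = #|` ground N|.+1)%N by lia.
    have [hX hB] := h2 eqk.
    have eqS : sumset X B = ground M.
      apply/eqP; rewrite eqEfcard sXB /=.
      have h : (#|` ground M| <= #|` sumset X B|)%N by lia.
      exact: h.
    apply: np; rewrite -eqS; apply: (vosper (leqnn _)) => //.
    have h : (#|` sumset X B|.+1 = #|` X| + #|` B|)%N by rewrite eqS; lia.
    exact: h.
  - have [x xX] := fset0Pn _ X0.
    have : trans B x `<=` sumset X B.
      apply/fsubsetP => z; rewrite in_trans => zB.
      by rewrite -(subrK x z) addrC; apply: mem_sumset.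
    move/fsubset_leq_card; rewrite card_trans => hb.
    by lia.
have HUE X : HU S X `<=` ground N.
  by apply/fsubsetP => b /inHU [a _]; rewrite inS => /andP[].
have hH : forall X, X `<=` A -> (#|` X| <= #|` HU S X|)%N.
  move=> X XA; rewrite leqNgt; apply/negP => lt.
  have X0 : X != fset0 by rewrite -cardfs_gt0; lia.
  pose B := 0 |` (ground N `\` HU S X).
  have cB : #|` B| = (#|` ground N| - #|` HU S X|).+1.
    by rewrite cardfsU1 in_fsetD (negbTE N0) andbF cardfsDS.
  have cH := fsubset_leq_card (HUE X).
  have cX := fsubset_leq_card XA.
  apply: (key X B) => //.
  - by apply/fset0Pn; exists 0; rewrite fset1U1.
  - apply/fsubsetP => z /sumsetP [x [b [xX]]]; rewrite in_fset1U => /orP[/eqP ->|].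
      by move=> ->; rewrite addr0; apply: (fsubsetP AE); apply: (fsubsetP XA).
    rewrite in_fsetD => /andP[bH bE] ->.
    case: (boolP (x + b \in ground M)) => // hx; exfalso; move/negP: bH; apply.
    by apply/inHU; exists x => //; rewrite inS bE.
  - by lia.
  - have h : (#|` ground N|.+1 <= #|` X| + #|` B|)%N by lia.
    exact: h.
  - move=> e; exfalso.
    have h : (#|` X| + #|` B| <> #|` ground N|.+1)%N by lia.
    exact: h e.
have [f [fi fS]] := hall (leqnn _) hH.
pose I := [fset f a | a in A].
have cI : #|` I| = n by rewrite card_in_imfset.
have IE : I `<=` ground N.
  by apply/fsubsetP => b /imfsetP [a aA ->]; have := fS a aA; rewrite inS => /andP[].
have [B0N hB0N cB0N] := hrN.
have fM a : a \in A -> a + f a \notin ground M by move=> aA; have := fS a aA; rewrite inS => /andP[].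
case: (classic (basis N I)) => bI.
  by exists I => //; exists f; split.
have nI : ~ indep N I.
  by move=> iI; apply: bI; apply: (indep_basis hN hB0N iI); rewrite cI cB0N.
have n2 : (2 <= n)%N.
  rewrite leqNgt; apply/negP => hn; apply: nI.
  have : (n == 0%N) || (n == 1%N) by lia.
  case/orP => /eqP nv; rewrite nv in cI.
    by rewrite (cardfs0_eq cI); case: hN.
  move/eqP/cardfs1P: cI => [x Ix]; rewrite Ix; apply: lN.
  by apply: (fsubsetP IE); rewrite Ix fset11.
case: (classic (exists a y, [/\ a \in A, y \in S a & y \notin I])).
  move=> [a [y [aA yS yI]]].
  have faI : f a \in I by apply: in_imfset.
  have yE : y \in ground N by move: yS; rewrite inS => /andP[].
  have bY : basis N (y |` (I `\ f a)).
    apply: (@P2 G N n (I `\ f a) (f a) y hN sp hrN) => //.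
    - by lia.
    - exact: fsubset_trans (fsubD1set _ _) IE.
    - by have := cardfsD1 (f a) I; rewrite faI cI; lia.
    - exact: (fsubsetP IE).
    - by rewrite fsetD11.
    - by rewrite in_fsetD1 (negbTE yI) andbF.
    - by apply: contraNneq yI => <-.
    - by rewrite fsetD1K.
  exists (y |` (I `\ f a)) => //.
  exists (fun z => if z == a then y else f z); split.
  - move=> z z' zA z'A /=.
    case: (boolP (z == a)) => za; case: (boolP (z' == a)) => z'a.
    + by rewrite (eqP za) (eqP z'a).
    + by move=> e; exfalso; move/negP: yI; apply; rewrite e; apply: in_imfset.
    + by move=> e; exfalso; move/negP: yI; apply; rewrite -e; apply: in_imfset.
    + exact: fi.
  - apply/fsetP => w; apply/imfsetP/idP.
      move=> [z zA ->] /=; rewrite in_fset1U; case: (boolP (z == a)) => za.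
        by rewrite eqxx.
      rewrite in_fsetD1 in_imfset // andbT orbC; apply/orP; left.
      by apply: contra za => /eqP /(fi _ _ zA aA) ->.
    rewrite in_fset1U => /orP[/eqP ->|]; first by exists a => //=; rewrite eqxx.
    rewrite in_fsetD1 => /andP[wfa /imfsetP [z zA wz]]; subst w; exists z => //=.
    case: (boolP (z == a)) => // /eqP za; exfalso; move/negP: wfa; apply; by rewrite za.
  - move=> z zA /=; case: (boolP (z == a)) => [/eqP ->|_]; last exact: fM.
    by move: yS; rewrite inS => /andP[].
move=> nex.
pose B := 0 |` (ground N `\` I).
have cB : #|` B| = (#|` ground N| - n).+1.
  by rewrite cardfsU1 in_fsetD (negbTE N0) andbF cardfsDS // cI.
have cEN := fsubset_leq_card IE.
have bigEN : (n < #|` ground N|)%N.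
  rewrite ltn_neqAle -cI cEN andbT; apply/negP => /eqP eN.
  apply: bI; have eI : I = ground N by apply/eqP; rewrite eqEfcard IE eN leqnn.
  have B0E := indep_sub hN hB0N.1.
  have eB : B0N = ground N by apply/eqP; rewrite eqEfcard B0E cB0N -eN cI leqnn.
  by rewrite eI -eB.
exfalso; apply: (key A B).
- by rewrite -cardfs_gt0; lia.
- by apply/fset0Pn; exists 0; rewrite fset1U1.
- apply/fsubsetP => z /sumsetP [x [b [xA]]]; rewrite in_fset1U => /orP[/eqP ->|].
    by move=> ->; rewrite addr0; apply: (fsubsetP AE).
  rewrite in_fsetD => /andP[bI' bE] ->.
  case: (boolP (x + b \in ground M)) => // hx; exfalso; apply: nex.
  by exists x, b; rewrite inS bE hx.
- by lia.
- have h : (#|` ground N|.+1 <= #|` A| + #|` B|)%N by lia.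
  exact: h.
- move=> _; split.
    have h : (2 <= #|` A|)%N by lia.
    exact: h.
  have h : (2 <= #|` B|)%N by lia.
  exact: h.
Qed.
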